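(* There exists $c\in\mathbb{N}$ such that for all $l\in\mathbb{N}$ and all $x,y\in\{0,1\}^*$, $$\mathrm{FS}^{l+c}(xy)\leq 2|x|+\mathrm{FS}^{l}(y)+2.$$
   Context: A finite-state transducer (FST) is a 4-tuple $T=(Q,\delta,\nu,q_0)$ with $Q$ a nonempty finite set of states, $\delta:Q\times\{0,1\}\to Q$ the transition function, $\nu:Q\times\{0,1\}\to\{0,1\}^*$ the output function, and $q_0\in Q$ the initial state; every state is assumed reachable from $q_0$. The extended transition function is $\widehat\delta(\lambda)=q_0$, $\widehat\delta(xa)=\delta(\widehat\delta(x),a)$, and the output of $T$ on $x$ is defined by $T(\lambda)=\lambda$, $T(xa)=T(x)\nu(\widehat\delta(x),a)$. Fix a standard binary representation $\sigma_T$ of each FST $T$ and let $|T|=|\sigma_T|$; let $\mathrm{FST}^{\leq k}=\{T\in\mathrm{FST}: |T|\le k\}$. For $k\in\mathbb{N}$ and $x\in\{0,1\}^*$, $\mathrm{FS}^k(x)=\min\{|p| : p\in\{0,1\}^*,\ \exists T\in\mathrm{FST}^{\leq k},\ T(p)=x\}$. Here $xy$ denotes concatenation. *)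

(* Defs.v *)
From mathcomp Require Import all_boot.
From Stdlib Require Import ClassicalEpsilon.

Set Implicit Arguments.
Unset Strict Implicit.
Unset Printing Implicit Defensive.

(* Binary strings are [seq bool] (false = 0, true = 1).
   Concrete model of an FST: the state set is Q = 'I_n.+1 = {0,...,n}
   (nonempty), the initial state is q0 = 0 (every FST is isomorphic to one of
   this form), delta : Q -> {0,1} -> Q, nu : Q -> {0,1} -> {0,1}^*, and every
   state is reachable from q0. *)

Definition dhat_of (n : nat) (d : 'I_n.+1 -> bool -> 'I_n.+1) (w : seq bool)
  : 'I_n.+1 := foldl d ord0 w.

Record FST := MkFST {
  fst_n : nat;
  fst_delta : 'I_fst_n.+1 -> bool -> 'I_fst_n.+1;
  fst_nu : 'I_fst_n.+1 -> bool -> seq bool;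
  fst_reach : forall q : 'I_fst_n.+1, exists w : seq bool, dhat_of fst_delta w = q
}.

Definition dhat (T : FST) (w : seq bool) : 'I_(fst_n T).+1 :=
  dhat_of (@fst_delta T) w.

(* Output T(w): T(lambda) = lambda, T(xa) = T(x) nu(dhat(x), a). *)
Fixpoint fst_out_rev (T : FST) (rw : seq bool) : seq bool :=
  match rw with
  | [::] => [::]
  | a :: rx => fst_out_rev T rx ++ fst_nu (dhat T (rev rx)) a
  end.
Definition fst_run (T : FST) (w : seq bool) : seq bool := fst_out_rev T (rev w).

(* binary expansion of a natural number (most significant bit first; 0 |-> empty) *)
Fixpoint bin_aux (fuel m : nat) : seq bool :=
  match fuel with
  | 0 => [::]
  | f.+1 => if m is 0 then [::] else rcons (bin_aux f m./2) (odd m)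
  end.
Definition bin (m : nat) : seq bool := bin_aux m m.

Definition sdcode (s : seq bool) : seq bool :=
  flatten [seq [:: b; b] | b <- s] ++ [:: false; true].

Definition enc_nat (m : nat) : seq bool := sdcode (bin m).

(* a transition target j from source i is encoded by the signed offset j - i:
   a sign bit followed by the self-delimiting binary code of |j - i| *)
Definition enc_offset (i j : nat) : seq bool :=
  if i <= j then false :: enc_nat (j - i) else true :: enc_nat (i - j).

Definition enc_state (T : FST) (q : 'I_(fst_n T).+1) : seq bool :=
  flatten [seq enc_offset q (fst_delta q b) ++ sdcode (fst_nu q b)
          | b <- [:: false; true]].

Definition sigma (T : FST) : seq bool :=
  enc_nat (fst_n T) ++ flatten [seq enc_state q | q <- enum 'I_(fst_n T).+1].

Definition fst_size (T : FST) : nat := size (sigma T).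

Definition FS_len (k : nat) (x : seq bool) (n : nat) : Prop :=
  exists (p : seq bool) (T : FST), fst_size T <= k /\ fst_run T p = x /\ size p = n.

Definition pbool (P : Prop) : bool :=
  if excluded_middle_informative P then true else false.

Lemma pboolP (P : Prop) : reflect P (pbool P).
Proof. by rewrite /pbool; case: excluded_middle_informative => H; constructor. Qed.

Lemma FS_ex (k : nat) (x : seq bool) :
  (exists n, FS_len k x n) -> exists n, pbool (FS_len k x n).
Proof. by case=> n Hn; exists n; apply/pboolP. Qed.

(* FS^k(x) = min { |p| : exists T in FST^{<=k}, T(p) = x };
   None encodes the minimum of the empty set (= +infinity). *)
Definition FS (k : nat) (x : seq bool) : option nat :=
  match excluded_middle_informative (exists n, FS_len k x n) with
  | left H => Some (ex_minn (FS_ex H))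
  | right _ => None
  end.

Definition ole (a b : option nat) : Prop :=
  match a, b with
  | _, None => True
  | None, Some _ => False
  | Some m, Some n => m <= n
  end.

(* Main.v *)
Require Import Defs.
From mathcomp Require Import all_boot zify.
From Stdlib Require Import ClassicalEpsilon.

Set Implicit Arguments.
Unset Strict Implicit.
Unset Printing Implicit Defensive.

Lemma bin_aux_fuel f f' m : m <= f -> m <= f' -> bin_aux f m = bin_aux f' m.
Proof.
elim: f f' m => [|f IH] [|f'] [|m] //= Hf Hf'.
congr rcons; apply: IH; lia.
Qed.

Definition sb m := size (bin m).

Lemma sbS m : 0 < m -> sb m = (sb m./2).+1.
Proof.
case: m => [|k] // _; rewrite /sb /bin /= size_rcons; congr S.
congr size; apply: bin_aux_fuel => //; lia.
Qed.

Lemma sb_mono m m' : m <= m' -> sb m <= sb m'.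
Proof.
elim: m' {-2}m' (leqnn m') m => [|k IH] m' Hm' m Hmm'.
  by have -> : m = 0 by lia.
case: m Hmm' => [|m] Hmm'; first by rewrite /sb /bin.
rewrite (sbS (ltn0Sn m)) (sbS (_ : 0 < m')) ?ltnS; last lia.
apply: IH; lia.
Qed.

Lemma sb_double m : 0 < m -> sb m.*2 = (sb m).+1.
Proof. move=> Hm; rewrite sbS ?doubleK //; lia. Qed.

Lemma sb_add3 m : sb m.+3 <= (sb m).+2.
Proof.
case: m => [|m]; first by [].
have H1 : sb m.+1.*2 = (sb m.+1).+1 by apply: sb_double.
have H2 : sb (m.+1.*2).*2 = (sb m.+1.*2).+1 by apply: sb_double; lia.
rewrite H1 in H2; rewrite -H2; apply: sb_mono; lia.
Qed.

Lemma size_dbl (s : seq bool) : size (flatten [seq [:: b; b] | b <- s]) = 2 * size s.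
Proof. elim: s => //= b s IH; rewrite IH; lia. Qed.

Lemma size_sdcode s : size (sdcode s) = 2 * size s + 2.
Proof. by rewrite /sdcode size_cat size_dbl. Qed.

Lemma size_enc_nat3 m : size (enc_nat m.+3) <= size (enc_nat m) + 4.
Proof. rewrite /enc_nat !size_sdcode; have := sb_add3 m; rewrite /sb; lia. Qed.

Lemma size_flatten_enum k (f : 'I_k -> seq bool) :
  size (flatten [seq f q | q <- enum 'I_k]) = \sum_(q < k) size (f q).
Proof.
rewrite size_flatten /shape -map_comp sumnE big_map big_enum /=.
by apply: eq_bigl => i; rewrite inE.
Qed.

Fixpoint runfrom n (d : 'I_n.+1 -> bool -> 'I_n.+1) (nu : 'I_n.+1 -> bool -> seq bool)
  (q : 'I_n.+1) (w : seq bool) : seq bool :=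
  if w is a :: w' then nu q a ++ runfrom d nu (d q a) w' else [::].

Lemma runfrom_rcons n (d : 'I_n.+1 -> bool -> 'I_n.+1) nu q w a :
  runfrom d nu q (rcons w a) = runfrom d nu q w ++ nu (foldl d q w) a.
Proof. by elim: w q => [|b w IH] q /=; rewrite ?cats0 // IH catA. Qed.

Lemma fst_run_runfrom T w : fst_run T w = runfrom (@fst_delta T) (@fst_nu T) ord0 w.
Proof.
elim/last_ind: w => [|w a IH] //.
by rewrite runfrom_rcons -IH /fst_run rev_rcons /= revK.
Qed.

Section Gadget.
Variable T : FST.

Definition gd (i : nat) (b : bool) : nat :=
  match i with
  | 0 => if b then 2 else 1
  | 1 => if b then 3 else 0
  | 2 => 0
  | j.+3 => (@fst_delta T (inord j) b).+3
  end.

Lemma gd_lt (i : 'I_(fst_n T).+4) b : gd i b < (fst_n T).+4.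
Proof.
case: i => [[|[|[|j]]] Hi] /=; try by case: b.
by have := ltn_ord (@fst_delta T (inord j) b); lia.
Qed.

Definition gdelta (i : 'I_(fst_n T).+4) (b : bool) : 'I_(fst_n T).+4 := inord (gd i b).

Lemma gdeltaE i b : nat_of_ord (gdelta i b) = gd i b.
Proof. by rewrite /gdelta inordK // gd_lt. Qed.

Definition gnu (i : 'I_(fst_n T).+4) (b : bool) : seq bool :=
  match nat_of_ord i with
  | 0 => [::]
  | 1 => if b then [::] else [:: false]
  | 2 => if b then [:: true] else [::]
  | j.+3 => @fst_nu T (inord j) b
  end.

Lemma inord3 (s : 'I_(fst_n T).+1) : nat_of_ord (inord s.+3 : 'I_(fst_n T).+4) = s.+3.
Proof. by rewrite inordK //; have := ltn_ord s; lia. Qed.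

Lemma gdelta3 (s : 'I_(fst_n T).+1) b :
  gdelta (inord s.+3) b = inord (@fst_delta T s b).+3.
Proof. by apply: val_inj => /=; rewrite gdeltaE !inord3 /= inord_val. Qed.

Lemma gnu3 (s : 'I_(fst_n T).+1) b : gnu (inord s.+3) b = @fst_nu T s b.
Proof. by rewrite /gnu inord3 inord_val. Qed.

Lemma gfold3 w (s : 'I_(fst_n T).+1) :
  foldl gdelta (inord s.+3) w = inord (foldl (@fst_delta T) s w).+3.
Proof. by elim: w s => [|b w IH] s //=; rewrite gdelta3 IH. Qed.

Lemma grun3 w (s : 'I_(fst_n T).+1) :
  runfrom gdelta gnu (inord s.+3) w = runfrom (@fst_delta T) (@fst_nu T) s w.
Proof. by elim: w s => [|b w IH] s //=; rewrite gdelta3 gnu3 IH. Qed.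

Lemma greach (q : 'I_(fst_n T).+4) : exists w, dhat_of gdelta w = q.
Proof.
case: q => [[|[|[|j]]] Hq].
- by exists [::]; apply: ord_inj.
- exists [:: false]; apply: ord_inj.
  rewrite (_ : dhat_of gdelta [:: false] = gdelta ord0 false) //.
  by rewrite gdeltaE.
- exists [:: true]; apply: ord_inj.
  rewrite (_ : dhat_of gdelta [:: true] = gdelta ord0 true) //.
  by rewrite gdeltaE.
have Hj : j < (fst_n T).+1 by move: Hq; clear; lia.
have [w Hw] := @fst_reach T (Ordinal Hj).
exists [:: false, true & w].
have E : gdelta (gdelta ord0 false) true = inord (ord0 : 'I_(fst_n T).+1).+3.
  by apply: ord_inj; rewrite inord3 !gdeltaE.
rewrite (_ : dhat_of gdelta [:: false, true & w] = foldl gdelta (gdelta (gdelta ord0 false) true) w) //.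
rewrite E gfold3; apply: ord_inj.
rewrite inord3; move: Hw; rewrite /dhat /dhat_of => ->.
by [].
Qed.

Definition GT : FST := @MkFST (fst_n T).+3 gdelta gnu greach.

Lemma runfrom_cons n (d : 'I_n.+1 -> bool -> 'I_n.+1) nu q a w :
  runfrom d nu q (a :: w) = nu q a ++ runfrom d nu (d q a) w.
Proof. by []. Qed.

Lemma gval0 : nat_of_ord (ord0 : 'I_(fst_n T).+4) = 0. Proof. by []. Qed.

Lemma GT_run x p :
  fst_run GT (flatten [seq [:: b; b] | b <- x] ++ [:: false, true & p]) = x ++ fst_run T p.
Proof.
rewrite !fst_run_runfrom.
change (runfrom gdelta gnu ord0 (flatten [seq [:: b; b] | b <- x] ++ [:: false, true & p]) =
   x ++ runfrom (@fst_delta T) (@fst_nu T) ord0 p).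
elim: x => [|b x IH].
  rewrite cat0s !runfrom_cons.
  have -> : gdelta (gdelta ord0 false) true = inord (ord0 : 'I_(fst_n T).+1).+3.
    by apply: ord_inj; rewrite inord3 !gdeltaE.
  rewrite grun3 /gnu gdeltaE gval0.
  by [].
change (runfrom gdelta gnu ord0 ([:: b; b] ++ (flatten [seq [:: b; b] | b <- x] ++ [:: false, true & p])) =
   b :: x ++ runfrom (@fst_delta T) (@fst_nu T) ord0 p).
rewrite cat_cons cat_cons cat0s !runfrom_cons.
have -> : gdelta (gdelta ord0 b) b = ord0.
  by apply: ord_inj; rewrite !gdeltaE gval0; case: b.
rewrite IH /gnu gdeltaE gval0.
by case: b.
Qed.

Lemma enc_state_exp (T0 : FST) (q : 'I_(fst_n T0).+1) : enc_state q =
  (enc_offset q (fst_delta q false) ++ sdcode (fst_nu q false)) ++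
  ((enc_offset q (fst_delta q true) ++ sdcode (fst_nu q true)) ++ [::]).
Proof. by []. Qed.

Lemma enc_offset3 i j : enc_offset i.+3 j.+3 = enc_offset i j.
Proof. by rewrite /enc_offset !ltnS !subSS. Qed.

Lemma encGT3 (s : 'I_(fst_n T).+1) : @enc_state GT (inord s.+3) = enc_state s.
Proof.
rewrite !enc_state_exp.
change (@fst_delta GT) with gdelta; change (@fst_nu GT) with gnu.
by rewrite !gdelta3 !gnu3 !inord3 !enc_offset3.
Qed.

Lemma encGT (q : 'I_(fst_n T).+4) : size (@enc_state GT q) =
  size ((enc_offset q (gd q false) ++ sdcode (gnu q false)) ++
  ((enc_offset q (gd q true) ++ sdcode (gnu q true)) ++ [::])).
Proof.
rewrite !enc_state_exp.
change (@fst_delta GT) with gdelta; change (@fst_nu GT) with gnu.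
by rewrite !gdeltaE.
Qed.

Lemma sum_enum k (f : 'I_k -> seq bool) :
  size (flatten [seq f q | q <- enum 'I_k]) = \sum_(q < k) size (f q).
Proof. exact: size_flatten_enum. Qed.

Lemma fst_size_eq (T0 : FST) : fst_size T0 =
  size (enc_nat (fst_n T0)) + \sum_(q < (fst_n T0).+1) size (enc_state q).
Proof. by rewrite /fst_size /sigma size_cat size_flatten_enum. Qed.

Lemma GT_sum : \sum_(q < (fst_n T).+4) size (@enc_state GT q) =
  54 + \sum_(j < (fst_n T).+1) size (enc_state j).
Proof.
do 3 rewrite big_ord_recl.
have E : forall j : 'I_(fst_n T).+1,
  (lift ord0 (lift ord0 (lift ord0 j)) : 'I_(fst_n T).+4) = inord j.+3.
  by move=> j; apply: ord_inj; rewrite inord3.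
under eq_bigr => j _ do rewrite E encGT3.
rewrite !encGT.
have q0 : nat_of_ord (ord0 : 'I_(fst_n T).+4) = 0 by [].
have q1 : nat_of_ord (lift ord0 ord0 : 'I_(fst_n T).+4) = 1 by [].
have q2 : nat_of_ord (lift ord0 (lift ord0 ord0) : 'I_(fst_n T).+4) = 2 by [].
rewrite /gnu q0 q1 q2.
have -> : size ((enc_offset 0 (gd 0 false) ++ sdcode [::]) ++ (enc_offset 0 (gd 0 true) ++ sdcode [::]) ++ [::]) = 16 by [].
have -> : size ((enc_offset 1 (gd 1 false) ++ sdcode [:: false]) ++ (enc_offset 1 (gd 1 true) ++ sdcode [::]) ++ [::]) = 18 by [].
have -> : size ((enc_offset 2 (gd 2 false) ++ sdcode [::]) ++ (enc_offset 2 (gd 2 true) ++ sdcode [:: true]) ++ [::]) = 20 by [].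
by rewrite !addnA.
Qed.

Lemma GT_size : fst_size GT <= fst_size T + 58.
Proof.
rewrite !fst_size_eq.
change (fst_n GT) with (fst_n T).+3.
rewrite GT_sum.
have := size_enc_nat3 (fst_n T); lia.
Qed.
End Gadget.

Lemma FS_le k x n : FS_len k x n -> ole (FS k x) (Some n).
Proof.
move=> Hn; rewrite /FS; case: excluded_middle_informative => H; last by exfalso; apply: H; exists n.
case: ex_minnP => m _ Hmin; apply: Hmin; exact/pboolP.
Qed.

Lemma FS_some k x m : FS k x = Some m -> FS_len k x m.
Proof.
rewrite /FS; case: excluded_middle_informative => H //.
case: ex_minnP => m' Hm _ [<-]; exact/pboolP.
Qed.

Theorem lemma4 :
  exists c : nat, forall (l : nat) (x y : seq bool),
    ole (FS (l + c) (x ++ y)) (omap (fun m => 2 * size x + m + 2) (FS l y)).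
Proof.
exists 58 => l x y.
case E: (FS l y) => [m|] /=; last by case: (FS _ _).
have [p [T [HT [Hrun Hp]]]] := FS_some E.
apply: FS_le.
exists (flatten [seq [:: b; b] | b <- x] ++ [:: false, true & p]), (GT T).
split; first by have := GT_size T; lia.
split; first by rewrite GT_run Hrun.
by rewrite size_cat size_dbl /= Hp; lia.
Qed.
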